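(* Let $G$ be a proper interval graph with no twin vertices, let $\sigma$ be a proper interval ordering of $G$, let each node of the line-incompatibility graph $\widehat{G}$ carry a positive weight, and let $I_{\widehat{G}}$ be a maximum-weight independent set of $\widehat{G}$. Let $x,y,z$ be vertices of $G$ with $x\prec y\prec z$ in $\sigma$ and $xz\in I_{\widehat{G}}$. (1) If $xy\notin I_{\widehat{G}}$ and $yz\in I_{\widehat{G}}$, then $xy$ is non-adjacent in $\widehat{G}$ to every node of the form $x_\ell x\in I_{\widehat{G}}$, and there is a vertex $w$ such that $yw\in I_{\widehat{G}}$, $\{x,w\}\notin E(G)$, and $z\prec w$. (2) If $xy\in I_{\widehat{G}}$ and $yz\notin I_{\widehat{G}}$, then $yz$ is non-adjacent in $\widehat{G}$ to every node of the form $zz_r\in I_{\widehat{G}}$, and there is a vertex $w$ such that $wy\in I_{\widehat{G}}$, $\{w,z\}\notin E(G)$, and $w\prec x$.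
   Context: All graphs are finite, simple and undirected. Two adjacent vertices $u,v$ are twins if $N[u]=N[v]$. A vertex ordering $\sigma$ of $G$ is a proper interval ordering if for all vertices $x\prec y\prec z$ in $\sigma$, $\{x,z\}\in E(G)$ implies $\{x,y\},\{y,z\}\in E(G)$; a graph is a proper interval graph if and only if it admits a proper interval ordering. The line-incompatibility graph $\widehat{G}$ of $G$ has one node $uv$ for each edge $\{u,v\}$ of $G$, two nodes being adjacent iff the corresponding edges are of the form $\{u,v\},\{v,w\}$ with $\{u,w\}\notin E(G)$. A maximum-weight independent set is an independent set maximizing the total weight of its nodes. *)

(* Defs.v *)
From HB Require Import structures.
From mathcomp Require Import all_boot all_order all_algebra.
Set Implicit Arguments. Unset Strict Implicit. Unset Printing Implicit Defensive.
Import Order.TTheory GRing.Theory Num.Theory.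

Definition simple_graph (T : finType) (e : rel T) : Prop :=
  symmetric e /\ irreflexive e.

Definition cnbhd (T : finType) (e : rel T) (u : T) : {set T} :=
  [set v | (v == u) || e u v].

Definition twin_free (T : finType) (e : rel T) : Prop :=
  forall u v : T, u != v -> e u v -> cnbhd e u <> cnbhd e v.

Definition vertex_ordering (T : finType) (sigma : seq T) : Prop :=
  perm_eq sigma (enum T).

Definition prec (T : eqType) (sigma : seq T) (x y : T) : bool :=
  index x sigma < index y sigma.

Definition proper_interval_ordering (T : finType) (e : rel T) (sigma : seq T)
  : Prop :=
  vertex_ordering sigma /\
  forall x y z : T, prec sigma x y -> prec sigma y z -> e x z ->
    e x y /\ e y z.

(* Nodes of the line-incompatibility graph: edges {u,v} of G, as 2-sets. *)
Definition lnode (T : finType) (e : rel T) (A : {set T}) : bool :=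
  [exists u, exists v, e u v && (A == [set u; v])].

Definition ladj (T : finType) (e : rel T) (A B : {set T}) : bool :=
  [exists u, exists v, exists w,
     [&& e u v, e v w, u != w, ~~ e u w,
         A == [set u; v] & B == [set v; w]]].

Definition lindependent (T : finType) (e : rel T) (S : {set {set T}}) : Prop :=
  (forall A, A \in S -> lnode e A) /\
  (forall A B, A \in S -> B \in S -> ~~ ladj e A B).

Definition weight_of (T : finType) (R : numDomainType)
  (wt : {set T} -> R) (S : {set {set T}}) : R :=
  (\sum_(A in S) wt A)%R.

Definition max_weight_independent (T : finType) (R : numDomainType)
  (e : rel T) (wt : {set T} -> R) (I : {set {set T}}) : Prop :=
  lindependent e I /\
  forall S, lindependent e S -> (weight_of wt S <= weight_of wt I)%R.

(* Main.v *)
Require Import Defs.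
From HB Require Import structures.
From mathcomp Require Import all_boot all_order all_algebra.
Import Order.TTheory GRing.Theory Num.Theory.
Set Implicit Arguments. Unset Strict Implicit.

Lemma set2_eq (T : finType) (u v x y : T) :
  [set u; v] = [set x; y] -> (u = x /\ v = y) \/ (u = y /\ v = x).
Proof.
move=> H.
have hu : u \in [set x; y] by rewrite -H !inE eqxx.
have hv : v \in [set x; y] by rewrite -H !inE eqxx orbT.
have hx : x \in [set u; v] by rewrite H !inE eqxx.
have hy : y \in [set u; v] by rewrite H !inE eqxx orbT.
rewrite !inE in hu hv hx hy.
case/orP: hu => /eqP hu; case/orP: hv => /eqP hv; subst;
  case/orP: hx => /eqP hx; case/orP: hy => /eqP hy; subst; auto.
Qed.

Lemma ladj_sym (T : finType) (e : rel T) A B :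
  symmetric e -> ladj e A B -> ladj e B A.
Proof.
move=> se /existsP[u /existsP[v /existsP[w /and5P[euv evw nuw neuw /andP[/eqP hA /eqP hB]]]]].
apply/existsP; exists w; apply/existsP; exists v; apply/existsP; exists u.
rewrite se evw se euv eq_sym nuw se neuw hA hB /= setUC eqxx /= setUC eqxx //.
Qed.

Lemma ladj_irr (T : finType) (e : rel T) A :
  simple_graph e -> ~~ ladj e A A.
Proof.
move=> [se ie]; apply/negP.
move=> /existsP[u /existsP[v /existsP[w /and5P[euv evw nuw neuw /andP[/eqP hA /eqP hB]]]]].
rewrite hA in hB; case: (set2_eq hB) => [[h1 h2]|[h1 h2]]; subst.
  by rewrite ie in euv.
by rewrite eqxx in nuw.
Qed.

Lemma ladj_left (T : finType) (e : rel T) x y B :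
  ladj e [set x; y] B ->
  exists b, (B = [set x; b] /\ ~~ e y b /\ e x b /\ y != b) \/
            (B = [set y; b] /\ ~~ e x b /\ e y b /\ x != b).
Proof.
move=> /existsP[u /existsP[v /existsP[w /and5P[euv evw nuw neuw /andP[/eqP hA /eqP hB]]]]].
exists w; case: (set2_eq (esym hA)) => [[h1 h2]|[h1 h2]]; subst; auto.
Qed.

Lemma node_edge (T : finType) (e : rel T) a b :
  symmetric e -> lnode e [set a; b] -> e a b.
Proof.
move=> se /existsP[u /existsP[v /andP[euv /eqP h]]].
case: (set2_eq h) => [[h1 h2]|[h1 h2]]; subst => //; by rewrite se.
Qed.

Lemma edge_node (T : finType) (e : rel T) a b : e a b -> lnode e [set a; b].
Proof. move=> h; apply/existsP; exists a; apply/existsP; exists b; by rewrite h eqxx. Qed.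

Lemma indep_share (T : finType) (e : rel T) I v a b :
  symmetric e -> lindependent e I -> [set v; a] \in I -> [set v; b] \in I ->
  e v a -> e v b -> a != b -> e a b.
Proof.
move=> se [_ hI] ha hb eva evb nab; apply/negPn/negP => neab.
have := hI _ _ ha hb; apply/negP/negPn.
apply/existsP; exists a; apply/existsP; exists v; apply/existsP; exists b.
by rewrite se eva evb nab neab /= setUC eqxx eqxx.
Qed.

Lemma addable (R : realFieldType) (T : finType) (e : rel T) (wt : {set T} -> R) I N :
  simple_graph e -> (forall A : {set T}, lnode e A -> (0 < wt A)%R) ->
  max_weight_independent e wt I -> lnode e N -> N \notin I ->
  exists2 B, B \in I & ladj e N B.
Proof.
move=> [se ie] wpos [[hIn hIa] hmax] hN nI.
case: (boolP [exists B in I, ladj e N B]) => [/exists_inP//|hno0].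
have hno : (exists2 B, B \in I & ladj e N B) -> False.
  by move=> hh; move/negP: hno0; apply; apply/exists_inP.
exfalso.
have Hind : lindependent e (N |: I).
  split.
    by move=> A; rewrite !inE => /orP[/eqP->|/hIn].
  move=> A B; rewrite !inE => /orP[/eqP->|hA] /orP[/eqP->|hB].
  - exact: ladj_irr.
  - by apply/negP => h; apply: hno; exists B.
  - by apply/negP => h; apply: hno; exists A => //; apply: ladj_sym.
  - exact: hIa.
have := hmax _ Hind; rewrite /weight_of big_setU1 //=.
apply/negP; rewrite -ltNge; apply: ltr_pwDl => //; exact: wpos.
Qed.

Lemma prec_neq (T : eqType) (s : seq T) a b : prec s a b -> a != b.
Proof. by rewrite /prec; apply: contraTneq => ->; rewrite ltnn. Qed.

Lemma prec_trans (T : eqType) (s : seq T) a b c : prec s a b -> prec s b c -> prec s a c.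
Proof. rewrite /prec; exact: ltn_trans. Qed.

Lemma trich (T : finType) (s : seq T) a b :
  vertex_ordering s -> a != b -> prec s a b \/ prec s b a.
Proof.
move=> vo nab.
have ha : a \in s by rewrite (perm_mem vo) mem_enum.
have hb : b \in s by rewrite (perm_mem vo) mem_enum.
rewrite /prec; case: (ltngtP (index a s) (index b s)) => h; auto.
by move: nab; rewrite (index_inj a ha hb h) eqxx.
Qed.

Theorem lemma8 (R : realFieldType) (T : finType) (e : rel T) (sigma : seq T)
  (wt : {set T} -> R) (I : {set {set T}}) (x y z : T) :
  simple_graph e ->
  twin_free e ->
  proper_interval_ordering e sigma ->
  (forall A : {set T}, lnode e A -> (0 < wt A)%R) ->
  max_weight_independent e wt I ->
  prec sigma x y -> prec sigma y z ->
  [set x; z] \in I ->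
  ( ([set x; y] \notin I -> [set y; z] \in I ->
      (forall xl : T, prec sigma xl x -> [set xl; x] \in I ->
         ~~ ladj e [set x; y] [set xl; x]) /\
      exists w : T, [/\ [set y; w] \in I, ~~ e x w & prec sigma z w])
  /\
    ([set x; y] \in I -> [set y; z] \notin I ->
      (forall zr : T, prec sigma z zr -> [set z; zr] \in I ->
         ~~ ladj e [set y; z] [set z; zr]) /\
      exists w : T, [/\ [set w; y] \in I, ~~ e w z & prec sigma w x]) ).
Proof.
move=> sg tf [vo pio] wpos mwi pxy pyz xzI.
have [se ie] := sg.
have Hind := mwi.1.
have exz : e x z by apply: (node_edge se); apply: Hind.1.
have pxz := prec_trans pxy pyz.
have [exy eyz] := pio _ _ _ pxy pyz exz.
have nxy := prec_neq pxy. have nyz := prec_neq pyz. have nxz := prec_neq pxz.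
split.
- move=> xyI yzI; split.
  + move=> xl pxl xlI; apply/negP => H.
    have nxlz : xl != z by apply: prec_neq (prec_trans pxl pxz).
    have exlx : e x xl by rewrite se; apply: (node_edge se); apply: Hind.1.
    have ezxl : e z xl.
      apply: (indep_share se Hind xzI _ exz exlx) => //; last by rewrite eq_sym.
      by rewrite setUC.
    have [exly _] := pio _ _ _ (prec_trans pxl pxy) pyz ltac:(by rewrite se).
    case: (ladj_left H) => b [[hB [neyb [exb nyb]]]|[hB [nexb [eyb nxb]]]].
    * rewrite setUC in hB; case: (set2_eq hB) => [[h1 h2]|[h1 h2]].
        by rewrite -h2 se exly in neyb.
      by move: pxl; rewrite h2 /prec ltnn.
    * rewrite setUC in hB; case: (set2_eq hB) => [[h1 h2]|[h1 h2]].
        by move: pxy; rewrite h1 /prec ltnn.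
      by move: (prec_trans pxl pxy); rewrite h2 /prec ltnn.
  + have [B BI] := addable sg wpos mwi (edge_node exy) xyI.
    case/ladj_left => b [[hB [neyb [exb nyb]]]|[hB [nexb [eyb nxb]]]]; subst B.
    * exfalso.
      have nbz : b != z by apply: contraNneq neyb => ->.
      have ezb := indep_share se Hind xzI BI exz exb ltac:(by rewrite eq_sym).
      have nxb : x != b by apply: contraTneq exb => ->; rewrite ie.
      case: (trich vo nyb) => pb.
        have [_ eyb] := pio _ _ _ pxy pb exb. by rewrite eyb in neyb.
      case: (trich vo nxb) => pb'.
        have [_ eby] := pio _ _ _ pb' pb exy. by rewrite se eby in neyb.
      have [eby _] := pio _ _ _ (prec_trans pb' pxy) pyz ltac:(by rewrite se).
      by rewrite se eby in neyb.
    * exists b; split => //.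
      have nbz : z != b by apply: contraNneq nexb => <-.
      have ezb := indep_share se Hind yzI BI eyz eyb nbz.
      case: (trich vo nbz) => // pb.
      rewrite eq_sym in nxb.
      case: (trich vo nxb) => pb'.
        have [ebx _] := pio _ _ _ pb' pxz ltac:(by rewrite se). by rewrite se ebx in nexb.
      have [exb _] := pio _ _ _ pb' pb exz. by rewrite exb in nexb.
- move=> xyI yzI; split.
  + move=> zr pzr zrI; apply/negP => H.
    have nxzr : x != zr by apply: prec_neq (prec_trans pxz pzr).
    have ezzr : e z zr by apply: (node_edge se); apply: Hind.1.
    have exzr : e x zr.
      apply: (indep_share se Hind _ zrI _ ezzr nxzr); first by rewrite setUC.
      by rewrite se.
    have [_ eyzr] := pio _ _ _ pxy (prec_trans pyz pzr) exzr.
    rewrite setUC in H.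
    case: (ladj_left H) => b [[hB [neyb [exb nyb]]]|[hB [nexb [eyb nxb]]]].
    * case: (set2_eq hB) => [[h1 h2]|[h1 h2]].
        by rewrite -h2 eyzr in neyb.
      by move: pzr; rewrite h2 /prec ltnn.
    * case: (set2_eq hB) => [[h1 h2]|[h1 h2]].
        by move: pyz; rewrite h1 /prec ltnn.
      by move: (prec_trans pyz pzr); rewrite h2 /prec ltnn.
  + rewrite setUC in yzI.
    have [B BI] := addable sg wpos mwi (edge_node (ltac:(by rewrite se; exact: eyz) : e z y)) yzI.
    case/ladj_left => b [[hB [neyb [ezb nyb]]]|[hB [nexb [eyb nzb]]]]; subst B.
    * exfalso.
      have nxb : x != b by apply: contraNneq neyb => <-; rewrite se.
      have exb : e x b.
        apply: (indep_share (v:=z) se Hind _ BI _ ezb nxb); first by rewrite setUC.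
        by rewrite se.
      rewrite eq_sym in nyb.
      case: (trich vo nyb) => pb.
        have [eby _] := pio _ _ _ pb pyz ltac:(by rewrite se). by rewrite se eby in neyb.
      have [_ eyb] := pio _ _ _ pxy pb exb. by rewrite eyb in neyb.
    * exists b; split => //; first by rewrite setUC.
        by rewrite se.
      have nxb : x != b by apply: contraNneq nexb => <-; rewrite se.
      have exb : e x b by apply: (indep_share (v:=y) se Hind _ BI _ eyb nxb); [rewrite setUC | rewrite se].
      rewrite eq_sym in nxb.
      case: (trich vo nxb) => // pb.
      rewrite eq_sym in nzb.
      case: (trich vo nzb) => pb'.
        have [_ ebz] := pio _ _ _ pb pb' exz. by rewrite se ebz in nexb.
      have [_ ezb] := pio _ _ _ pxz pb' exb. by rewrite ezb in nexb.
Qed.
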